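(* Let $H$ be a finite group, $p$ a prime, and $S$ a Sylow $p$-subgroup of $H$. If $Z(S) \leq O_{p',p}(H)$, then $Z(S)$ splits over $W_H(S)$, i.e., there is a subgroup $K \leq Z(S)$ with $Z(S) = W_H(S) \times K$.
   Context: For a finite group $G$ with Sylow $p$-subgroup $S$, an element $x \in S$ is weakly closed in $S$ with respect to $G$ if $x^g = x$ whenever $g \in G$ and $x^g := g^{-1}xg \in S$. $W_G(S)$ denotes the subgroup of all elements of $S$ that are weakly closed in $S$ with respect to $G$. $O_{p'}(H)$ is the largest normal $p'$-subgroup of $H$, and $O_{p',p}(H)$ is the normal subgroup of $H$ containing $O_{p'}(H)$ with $O_{p',p}(H)/O_{p'}(H) = O_p(H/O_{p'}(H))$, where $O_p$ denotes the largest normal $p$-subgroup. *)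

(* Defs.v *)
From mathcomp Require Import all_boot all_fingroup all_solvable.
Set Implicit Arguments.
Unset Strict Implicit.
Unset Printing Implicit Defensive.
Local Open Scope group_scope.

(* W_G(S): elements of S weakly closed in S with respect to G.
   x^g is MathComp's conjugation g^-1 x g, matching the paper. *)
Definition weakly_closed_elts (gT : finGroupType) (G S : {set gT}) : {set gT} :=
  [set x in S | [forall g in G, (x ^ g \in S) ==> (x ^ g == x)]].

(* Main.v *)
Require Import Defs.
From mathcomp Require Import all_boot all_fingroup all_solvable.
From mathcomp Require Import ssralg.
Local Open Scope group_scope.
Import GRing.Theory FiniteModule.

Lemma fix_conjG (gT : finGroupType) (x : gT) (X : {set gT}) y :
  x \in 'C(X) -> y \in X -> x ^ y = x.
Proof. by move=> cXx Xy; apply/conjg_fixP/commgP; have := centP cXx y Xy; rewrite /commute => ->. Qed.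

Arguments fix_conjG {gT x X y}.

Section Core.
Variables (gT : finGroupType) (A G P B : {group gT}).
Hypotheses (abA : abelian A) (nAG : G \subset 'N(A)) (sPG : P \subset G)
  (coAG : coprime #|A| #|G : P|) (sWB : 'C_A(G) \subset B) (sBC : B \subset 'C_A(P)).

Let m := #|G : P|.
Local Notation fA := (fmod_of abA).
Let nu (u : fA) : fA := (\sum_(C in rcosets P G) u ^@ repr C)%R.

Let nuD u v : nu (u + v)%R = (nu u + nu v)%R.
Proof. by rewrite /nu -big_split; apply: eq_bigr => C _; apply: actAr. Qed.

Let actP (u : fA) : (forall y, y \in P -> u ^@ y = u)%R ->
  forall x a, x \in G -> a \in P :* x -> (u ^@ a = u ^@ x)%R.
Proof.
move=> uP x a Gx /rcosetP[y Py ->].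
have NA z : z \in G -> z \in 'N(A) by move=> Gz; apply: (subsetP nAG).
have Ny : y \in 'N(A) by apply/NA/(subsetP sPG).
have Nx : x \in 'N(A) by apply: NA.
by rewrite actrM // uP.
Qed.

Let nuJ u : (forall y, y \in P -> u ^@ y = u)%R ->
  forall g, g \in G -> (nu u ^@ g = nu u)%R.
Proof.
move=> uP g Gg; rewrite /nu actr_sum.
rewrite [RHS](reindex_acts 'Rs (actsRs_rcosets P G) Gg).
apply: eq_bigr => C /rcosetsP[x Gx ->] /=.
have NA z : z \in G -> z \in 'N(A) by move=> Gz; apply: (subsetP nAG).
have rC := mem_repr_rcoset P x.
have Gr : repr (P :* x) \in G.
  by case/rcosetP: rC => y Py ->; rewrite groupM // (subsetP sPG).
rewrite -actrM ?NA //.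
have xg : x * g \in G by rewrite groupM.
rewrite (actP _ uP (x * g) (repr (P :* x) * g) xg); last first.
  by case/rcosetP: rC => y Py ->; rewrite -mulgA; apply/rcosetP; exists y.
by rewrite rcosetE -rcosetM (actP _ uP (x * g) _ xg) //; exact: mem_repr_rcoset.
Qed.

Let nu_fix w : (forall g, g \in G -> w ^@ g = w)%R -> nu w = (w *+ m)%R.
Proof.
move=> wG; rewrite /nu (eq_bigr (fun _ => w)) ?sumr_const //.
move=> C /rcosetsP[x Gx ->]; apply: wG.
have rC := mem_repr_rcoset P x.
by case/rcosetP: rC => y Py ->; rewrite groupM // (subsetP sPG).
Qed.

Let f x := fmval (nu (fmod abA x)).
Let fM : {in A &, {morph f : x y / x * y}}.
Proof. by move=> x y Ax Ay; rewrite /f fmodM // nuD fmvalA. Qed.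
Let fm := @Morphism _ _ A f fM.

Let fix_conj x (X : {set gT}) y : x \in 'C(X) -> y \in X -> x ^ y = x.
Proof. by move=> cXx Xy; apply/conjg_fixP/commgP; have := centP cXx y Xy; rewrite /commute => ->. Qed.

Let fC x : x \in 'C_A(P) -> forall y, y \in P -> (fmod abA x ^@ y = fmod abA x)%R.
Proof.
move=> /setIP[Ax cPx] y Py; rewrite -fmodJ; last exact/(subsetP nAG)/(subsetP sPG).
by rewrite (fix_conj _ _ _ cPx).
Qed.

Let fW x : x \in 'C_A(G) -> f x = x ^+ m.
Proof.
move=> /setIP[Ax cGx]; rewrite /f nu_fix; first by rewrite fmvalZ fmodK.
by move=> g Gg; rewrite -fmodJ ?(subsetP nAG) // (fix_conj _ _ _ cGx).
Qed.

Let fWin x : x \in 'C_A(P) -> f x \in 'C_A(G).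
Proof.
move=> CPx; rewrite inE fmodP /=; apply/centP => g Gg.
apply/commgP/conjg_fixP.
by rewrite /f -fmvalJ ?(subsetP nAG) // (nuJ _ (fC _ CPx)).
Qed.

Lemma core_split : exists K : {group gT}, K \subset B /\ 'C_A(G) \x K = B.
Proof.
exists (B :&: 'ker fm)%G; split; first exact: subsetIl.
have sWA : 'C_A(G) \subset A := subsetIl _ _.
have sBA : B \subset A := subset_trans sBC (subsetIl _ _).
have eK x : x \in A -> (x ^+ m) ^+ expg_invn A m = x := @expgK _ _ _ coAG x.
rewrite dprodE.
- apply/eqP; rewrite eqEsubset mulG_subG sWB subsetIl /=.
  apply/subsetP => x Bx.
  have Ax := subsetP sBA x Bx.
  have Wy : f x \in 'C_A(G) := fWin _ (subsetP sBC x Bx).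
  have Ww : f x ^+ expg_invn A m \in 'C_A(G) by rewrite groupX.
  have wm : (f x ^+ expg_invn A m) ^+ m = f x by rewrite expgAC eK // (subsetP sWA).
  rewrite -(mulKVg (f x ^+ expg_invn A m) x); apply: mem_mulg => //.
  have Aw := subsetP sWA _ Ww.
  rewrite inE groupM ?groupV ?(subsetP sWB _ Ww) //=.
  apply/(kerP fm); first by rewrite groupM ?groupV.
  by rewrite morphM ?groupV // morphV //= (fW _ Ww) wm mulVg.
- exact: subset_trans (subsetIl _ _) (subset_trans sBA (subset_trans abA (centS sWA))).
- apply/trivgP/subsetP => x /setIP[Wx /setIP[Bx Kx]]; rewrite inE.
  have Ax := subsetP sWA x Wx.
  move/(kerP fm Ax): Kx; rewrite /= (fW _ Wx) => xm1.
  by rewrite -(eK x Ax) xm1 expg1n.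
Qed.
End Core.

Theorem proposition2p2 (gT : finGroupType) (H S : {group gT}) (p : nat) :
  prime p -> S \in 'Syl_p(H) ->
  'Z(S) \subset 'O_{p^', p}(H) ->
  exists K : {group gT},
    K \subset 'Z(S) /\ weakly_closed_elts H S \x K = 'Z(S).
Proof.
move=> pr_p; rewrite inE => sylS sZL.
pose N : {group gT} := 'O_p^'(H)%G.
have nNH : H \subset 'N(N) := gFnorm _ _.
have sSH : S \subset H := pHall_sub sylS.
have pS : p.-group S := pHall_pgroup sylS.
have p'N : p^'.-group N := pcore_pgroup _ _.
have tiSN : S :&: N = 1 := coprime_TIg (pnat_coprime pS p'N).
have sZS : 'Z(S) \subset S := center_sub S.
have nSN : S \subset 'N(N) := subset_trans sSH nNH.
have nZN : 'Z(S) \subset 'N(N) := subset_trans sZS nSN.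
have sylSb : p.-Sylow(H / N) (S / N) := morphim_pHall (coset N) nSN sylS.
have eL : 'O_{p^',p}(H) / N = 'O_p(H / N) := quotient_pseries2 _ _ _.
have sLbSb : 'O_p(H / N) \subset S / N := pcore_sub_Hall sylSb.
have abA : abelian 'Z('O_p(H / N)) := center_abelian _.
have nAHb : H / N \subset 'N('Z('O_p(H / N))).
  exact: normal_norm (char_normal_trans (center_char _) (pcore_normal _ _)).
have pA : p.-group 'Z('O_p(H / N)) := pgroupS (center_sub _) (pcore_pgroup _ _).
have coA : coprime #|'Z('O_p(H / N))| #|H / N : S / N|.
  by apply: (pnat_coprime pA); case/and3P: sylSb.
have sZbL : 'Z(S) / N \subset 'O_p(H / N) by rewrite -eL quotientS.
have cZbS : 'Z(S) / N \subset 'C(S / N) by apply: quotient_cents; apply: subsetIr.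
have sZbA : 'Z(S) / N \subset 'Z('O_p(H / N)).
  by rewrite /center subsetI sZbL (subset_trans cZbS) ?centS.
have sZbC : 'Z(S) / N \subset 'C_('Z('O_p(H / N)))(S / N) by rewrite subsetI sZbA.
have injS : 'injm (restrm nSN (coset N)) by rewrite ker_restrm ker_coset tiSN.
have sWZb : 'C_('Z('O_p(H / N)))(H / N) \subset 'Z(S) / N.
  apply/subsetP => yb /setIP[Ay cHy].
  have : yb \in S / N by apply: (subsetP sLbSb); apply: (subsetP (center_sub _)).
  case/morphimP => s Ns Ss def_y; rewrite def_y in cHy *.
  apply: mem_quotient; rewrite inE Ss; apply/centP => t St.
  have ct : coset N t \in H / N by apply: mem_quotient; apply: (subsetP sSH).
  apply: (injmP injS) => //; try by rewrite groupM.
  by rewrite /= !morphM ?(subsetP nSN) // (centP cHy _ ct).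
have [Kb [sKbZ dKb]] := core_split _ _ _ _ ('Z(S) / N)%G abA nAHb (pHall_sub sylSb) coA sWZb sZbC.
have injZ : 'injm (restrm nZN (coset N)).
  by rewrite ker_restrm ker_coset -tiSN setSI.
have imZ : restrm nZN (coset N) @* 'Z(S) = 'Z(S) / N by rewrite morphim_restrm setIid.
have eW : weakly_closed_elts H S = invm injZ @* 'C_('Z('O_p(H / N)))(H / N).
  rewrite morphim_invmE; apply/setP => x; apply/idP/idP.
    rewrite inE => /andP[Sx /forall_inP wc].
    have wc' g : g \in H -> x ^ g \in S -> x ^ g = x.
      by move=> Hg Sg; apply/eqP; apply: (implyP (wc g Hg)).
    have Zx : x \in 'Z(S).
      rewrite inE Sx; apply/centP => s Ss.
      apply/commgP/conjg_fixP; apply: wc' (subsetP sSH s Ss) _.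
      by rewrite groupJ.
    have Nx : x \in 'N(N) := subsetP nZN x Zx.
    apply/morphpreP; split=> //=; rewrite inE.
    rewrite (subsetP sZbA) ?mem_quotient //=.
    apply/centP => gb /morphimP[g Ng Hg ->].
    apply/commgP/conjg_fixP.
    have Lx := subsetP sZL x Zx.
    have Lxg : x ^ g \in 'O_{p^',p}(H).
      by rewrite memJ_norm // (subsetP (gFnorm _ _)).
    have Nxg : x ^ g \in 'N(N) by rewrite groupJ.
    have : coset N (x ^ g) \in S / N.
      by apply: (subsetP sLbSb); rewrite -eL mem_quotient.
    case/morphimP => s Ns Ss e1.
    have nNS : S \subset 'N(N) := nSN.
    have sMH : (N <*> S) \subset H by rewrite join_subG pcore_sub sSH.
    have Mxg : x ^ g \in N <*> S.
      rewrite norm_joinEr // -(mulgKV s (x ^ g)); apply: mem_mulg => //.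
      apply: coset_idr; first by rewrite groupM ?groupV.
      by rewrite morphM ?groupV // morphV //= e1 mulgV.
    have sylSM : p.-Sylow(N <*> S) S.
      exact: pHall_subl (joing_subr _ _) sMH sylS.
    have pXg : p.-group <[x ^ g]>.
      apply: pgroupS (_ : <[x ^ g]> \subset S :^ g) _; last by rewrite pgroupJ.
      by rewrite cycle_subG memJ_conjg.
    have sXM : <[x ^ g]> \subset N <*> S by rewrite cycle_subG.
    have [y My sJ] := Sylow_Jsub sylSM sXM pXg.
    move: sJ; rewrite -cycleJ cycle_subG -conjgM => Sxgy.
    move: My; rewrite /= norm_joinEr // => /mulsgP[n s' Nn Ss' def_y].
    have Hy : y \in H by apply: (subsetP sMH); rewrite norm_joinEr // def_y mem_mulg.
    have exy := wc' (g * y) (groupM Hg Hy) Sxgy.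
    rewrite def_y in exy.
    have Nn' : n \in 'N(N) := subsetP (normG _) n Nn.
    have Ns' : s' \in 'N(N) := subsetP nSN s' Ss'.
    have e2 : coset N (x ^ (g * (n * s'))) = coset N x by rewrite exy.
    rewrite morphJ ?groupM // morphM ?groupM // morphM // in e2.
    rewrite /= (coset_id Nn) mul1g conjgM in e2.
    have cxS : coset N x \in 'C(S / N) := subsetP cZbS _ (mem_quotient _ Zx).
    have cs'S : (coset N s')^-1 \in S / N by rewrite groupV mem_quotient.
    by rewrite /= -(conjgK (coset N s') (coset N x ^ coset N g)) e2 (fix_conjG cxS cs'S).
  case/morphpreP => Zx /setIP[_ cH].
  rewrite inE (subsetP sZS _ Zx) /=; apply/forall_inP => g Hg; apply/implyP => Sxg; apply/eqP.
  have Sx := subsetP sZS _ Zx.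
  apply: (injmP injS) => //=.
  have Ng := subsetP nNH g Hg; have Nx := subsetP nZN x Zx.
  change (coset N (x ^ g) = coset N x); rewrite morphJ //.
  by rewrite (fix_conjG cH (mem_quotient _ Hg)).
exists (invm injZ @* Kb)%G; split.
  apply: subset_trans (morphimS _ sKbZ) _.
  by rewrite /= -imZ morphim_invm.
rewrite eW; have sZD : ('Z(S) / N)%G \subset restrm nZN (coset N) @* 'Z(S) by rewrite imZ.
have := injm_dprod sZD (injm_invm injZ) dKb.
move=> ->; rewrite /= -imZ morphim_invm //.
Qed.
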